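(* The following hold: (1) $\mathsf{SLT}\subsetneq\mathsf{LLT}\subsetneq\mathsf{LLT}_\cup\subseteq\mathsf{LLT}_{\cup\cap}\subsetneq\mathsf{LTT}$ and $\mathsf{SLT}_\cup\subsetneq\mathsf{LLT}_\cup$. (2) $\mathsf{LLT}$ and $\mathsf{LT}$ are incomparable (neither contains the other), and $\mathsf{LLT}_\cup$ and $\mathsf{LT}$ are incomparable. (3) $\mathsf{LTT}$ equals the closure of $\mathsf{LLT}$ under union, intersection and complement.
   Context: Let $\Sigma$ be a finite alphabet. For a word $w$ and $\ell\in\mathbb N_0$, $p_\ell(w)$ (resp. $s_\ell(w)$) is the prefix (resp. suffix) of $w$ of length $\ell$ if $|w|\ge\ell$ and $w$ otherwise; $I_\ell(w)$ is the set of infixes of $w$ of length exactly $\ell$; $|w|_m$ is the number of occurrences of $m$ as an infix of $w$; $\Sigma^{\le\ell}$ is the set of words of length $\le\ell$. The empty word is disregarded in all language comparisons. $\mathsf{SLT}$: $L$ is strictly locally testable if there are $\ell\in\mathbb N_+$, $\pi,\sigma\subseteq\Sigma^{\le\ell}$, $\mu\subseteq\Sigma^\ell$ with $w\in L\iff p_{\ell-1}(w)\in\pi$, $I_\ell(w)\subseteq\mu$, $s_{\ell-1}(w)\in\sigma$. $\mathsf{LT}$: $L$ is locally testable if there is $\ell\in\mathbb N_+$ such that whenever $p_{\ell-1}(w_1)=p_{\ell-1}(w_2)$, $I_\ell(w_1)=I_\ell(w_2)$ and $s_{\ell-1}(w_1)=s_{\ell-1}(w_2)$, then $w_1\in L\iff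 w_2\in L$. $\mathsf{LTT}$: $L$ is locally threshold testable if there are $\theta,\ell\in\mathbb N_+$ such that for all $w_1,w_2$ with $p_{\ell-1}(w_1)=p_{\ell-1}(w_2)$, $s_{\ell-1}(w_1)=s_{\ell-1}(w_2)$, and for every $m\in\Sigma^\ell$ ($|w_i|_m<\theta$ for some $i\in\{1,2\}$ implies $|w_1|_m=|w_2|_m$), we have $w_1\in L\iff w_2\in L$. $\mathsf{LLT}$: for $\ell\in\mathbb N_0$, $\theta\in\mathbb R_{\ge0}$, $\pi,\sigma\subseteq\Sigma^{\le\ell-1}$, $\alpha\colon\Sigma^\ell\to\mathbb R_{\ge0}$, $\mathrm{LLin}_\ell(\pi,\sigma,\alpha,\theta)$ is the set of $w\in\Sigma^+$ with $p_{\ell-1}(w)\in\pi$, $s_{\ell-1}(w)\in\sigma$ and $\sum_{m\in\Sigma^\ell}\alpha(m)|w|_m\le\theta$; $\mathsf{LLT}$ is the class of all such languages (over all finite alphabets). $\mathsf{SLT}_\cup$, $\mathsf{LLT}_\cup$ denote closures under finite union; $\mathsf{LLT}_{\cup\cap}$ the closure of $\mathsf{LLT}$ under finite union and intersection. *)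

(* Defs.v *)
From mathcomp Require Import all_boot all_order all_algebra.
From mathcomp Require Import Rstruct.
From Stdlib Require Rdefinitions.
Set Implicit Arguments. Unset Strict Implicit. Unset Printing Implicit Defensive.
Import GRing.Theory Num.Theory.

Definition lang (S : finType) := seq S -> Prop.

Definition lang_eq (S : finType) (L1 L2 : lang S) : Prop :=
  forall w : seq S, w <> [::] -> (L1 w <-> L2 w).

Definition lclass := forall S : finType, lang S -> Prop.

Definition csub (C1 C2 : lclass) : Prop := forall (S : finType) (L : lang S), C1 S L -> C2 S L.
Definition csubneq (C1 C2 : lclass) : Prop :=
  csub C1 C2 /\ exists (S : finType) (L : lang S), C2 S L /\ ~ C1 S L.
Definition cincomparable (C1 C2 : lclass) : Prop := ~ csub C1 C2 /\ ~ csub C2 C1.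
Definition ceq (C1 C2 : lclass) : Prop := forall (S : finType) (L : lang S), C1 S L <-> C2 S L.

Definition pref (S : finType) (l : nat) (w : seq S) : seq S := take l w.
Definition suff (S : finType) (l : nat) (w : seq S) : seq S := drop (size w - l) w.

(* |w|_m : number of positions i (0 <= i <= |w|) at which m occurs in w.
   For m = [::] this is |w|+1. *)
Definition occ (S : finType) (m w : seq S) : nat :=
  count (fun i => take (size m) (drop i w) == m) (iota 0 (size w).+1).

Definition infixes (S : finType) (l : nat) (w : seq S) : seq S -> Prop :=
  fun m => size m = l /\ infix m w.

Definition SLT : lclass := fun S L =>
  exists (l : nat) (pi sigma mu : seq S -> Prop),
    0 < l /\
    (forall u, pi u -> size u <= l) /\ (forall u, sigma u -> size u <= l) /\
    (forall u, mu u -> size u = l) /\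
    forall w : seq S, w <> [::] ->
      (L w <-> (pi (pref l.-1 w) /\ (forall m, infixes l w m -> mu m) /\ sigma (suff l.-1 w))).

Definition LT : lclass := fun S L =>
  exists l : nat, 0 < l /\
    forall w1 w2 : seq S, w1 <> [::] -> w2 <> [::] ->
      pref l.-1 w1 = pref l.-1 w2 ->
      (forall m, infixes l w1 m <-> infixes l w2 m) ->
      suff l.-1 w1 = suff l.-1 w2 ->
      (L w1 <-> L w2).

Definition LTT : lclass := fun S L =>
  exists theta l : nat, 0 < theta /\ 0 < l /\
    forall w1 w2 : seq S, w1 <> [::] -> w2 <> [::] ->
      pref l.-1 w1 = pref l.-1 w2 ->
      suff l.-1 w1 = suff l.-1 w2 ->
      (forall m : seq S, size m = l ->
         ((occ m w1 < theta)%N \/ (occ m w2 < theta)%N) -> occ m w1 = occ m w2) ->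
      (L w1 <-> L w2).

Local Open Scope ring_scope.
Definition LLin (S : finType) (l : nat) (pi sigma : seq S -> Prop)
  (alpha : l.-tuple S -> Rdefinitions.R) (theta : Rdefinitions.R) : lang S :=
  fun w => w <> [::] /\ pi (pref l.-1 w) /\ sigma (suff l.-1 w) /\
    \sum_(m : l.-tuple S) alpha m * (occ (tval m) w)%:R <= theta.

(* pi, sigma range over subsets of Sigma^{<= l-1} (truncated subtraction:
   for l = 0 this is Sigma^{<= 0} = {eps}). *)
Definition LLT : lclass := fun S L =>
  exists (l : nat) (pi sigma : seq S -> Prop) (alpha : l.-tuple S -> Rdefinitions.R) (theta : Rdefinitions.R),
    (forall u, pi u -> (size u <= l.-1)%N) /\ (forall u, sigma u -> (size u <= l.-1)%N) /\
    (forall m, 0 <= alpha m) /\ 0 <= theta /\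
    lang_eq L (LLin pi sigma alpha theta).
Local Close Scope ring_scope.

Inductive gen_U (C : lclass) (S : finType) : lang S -> Prop :=
| gU_base L : C S L -> gen_U C L
| gU_union L1 L2 : gen_U C L1 -> gen_U C L2 -> gen_U C (fun w => L1 w \/ L2 w).

Inductive gen_UI (C : lclass) (S : finType) : lang S -> Prop :=
| gUI_base L : C S L -> gen_UI C L
| gUI_union L1 L2 : gen_UI C L1 -> gen_UI C L2 -> gen_UI C (fun w => L1 w \/ L2 w)
| gUI_inter L1 L2 : gen_UI C L1 -> gen_UI C L2 -> gen_UI C (fun w => L1 w /\ L2 w).

(* complement is taken within Sigma^+ (the empty word being disregarded) *)
Inductive gen_UIC (C : lclass) (S : finType) : lang S -> Prop :=
| gUIC_base L : C S L -> gen_UIC C L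
| gUIC_union L1 L2 : gen_UIC C L1 -> gen_UIC C L2 -> gen_UIC C (fun w => L1 w \/ L2 w)
| gUIC_inter L1 L2 : gen_UIC C L1 -> gen_UIC C L2 -> gen_UIC C (fun w => L1 w /\ L2 w)
| gUIC_compl L1 : gen_UIC C L1 -> gen_UIC C (fun w => ~ L1 w).

Definition closeU (C : lclass) : lclass := fun S L => exists L', gen_U C L' /\ lang_eq L L'.
Definition closeUI (C : lclass) : lclass := fun S L => exists L', gen_UI C L' /\ lang_eq L L'.
Definition closeUIC (C : lclass) : lclass := fun S L => exists L', gen_UIC C L' /\ lang_eq L L'.

Definition SLT_U : lclass := closeU SLT.
Definition LLT_U : lclass := closeU LLT.
Definition LLT_UI : lclass := closeUI LLT.

(* Main.v *)
Require Import Defs.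
From mathcomp Require Import all_boot all_order all_algebra.
From mathcomp Require Import Rstruct zify.
From Stdlib Require Import ClassicalEpsilon Classical.
Set Implicit Arguments. Unset Strict Implicit. Unset Printing Implicit Defensive.
Import Order.TTheory GRing.Theory Num.Theory.

Section Occ.
Variable S : finType.
Implicit Types m w u v x : seq S.

Lemma occ_nil m : occ m [::] = (([::] : seq S) == m).
Proof. by rewrite /occ /= addn0. Qed.

Lemma occ_cons m y w : occ m (y :: w) = (take (size m) (y :: w) == m) + occ m w.
Proof.
rewrite /occ. change (iota 0 (size (y::w)).+1) with (0 :: iota (1 + 0) (size w).+1).
rewrite iotaDl /= count_map drop0; congr (_ + _).
Qed.

Lemma occ_pos m w : (0 < occ m w) = infix m w.
Proof.
elim: w => [|y w IH]; first by rewrite occ_nil infixs0 eq_sym; case: eqP.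
by rewrite occ_cons infix_consl -IH prefixE; case: eqP.
Qed.

Lemma occ_catl m u w : occ m w <= occ m (u ++ w).
Proof. elim: u => [|y u IH] //=; rewrite occ_cons; lia. Qed.

Lemma occ_catr m w v : occ m w <= occ m (w ++ v).
Proof.
elim: w => [|y w IH] /=.
  by rewrite occ_nil; case: eqP => [<-|] //=; rewrite occ_pos infix0s.
rewrite !occ_cons; apply: leq_add => //.
case: eqP => // Hm.
suff -> : take (size m) ((y :: w) ++ v) = m by rewrite eqxx.
rewrite take_cat; case: ltnP => // H.
move: (f_equal size Hm); rewrite size_take; case: ltnP => H2 H3; first by move: H2; rewrite ltnNge H.
rewrite take_oversize // in Hm.
by rewrite H3 subnn take0 cats0.
Qed.

Lemma occ_infix m w u v : occ m w <= occ m (u ++ w ++ v).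
Proof. exact: leq_trans (occ_catr _ _ _) (occ_catl _ _ _). Qed.

Lemma occ_seq1 y w : occ [:: y] w = count_mem y w.
Proof.
elim: w => [|z w IH]; first by rewrite occ_nil.
by rewrite occ_cons IH /= take0 eqseq_cons andbT.
Qed.

Lemma sum_eq1 (z : S) : \sum_(x : S) (z == x : nat) = 1.
Proof.
rewrite (bigD1 z) //= eqxx big1 // => i /negPf; rewrite eq_sym => ->; done.
Qed.

Lemma occ_decomp m w :
  occ m w = \sum_(x : S) occ (rcons m x) w + (suff (size m) w == m).
Proof.
elim: w => [|y w IH].
  rewrite occ_nil big1 /=; last by move=> x _; rewrite occ_nil; case: m.
  by rewrite /suff sub0n drop0.
have key : (take (size m) (y :: w) == m) + (suff (size m) w == m) =
  \sum_(x : S) (take (size (rcons m x)) (y :: w) == rcons m x) + (suff (size m) (y :: w) == m).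
  under eq_bigr => x _ do rewrite size_rcons.
  have [Hs|Hs] := leqP (size m) (size w).
  - have ->: suff (size m) (y :: w) = suff (size m) w.
      by rewrite /suff /= subSn.
    congr (_ + _).
    have Ht : size m < size (y :: w) by rewrite /=; lia.
    rewrite (take_nth y Ht).
    under eq_bigr => x _ do rewrite eqseq_rcons.
    case: eqP => _ /=; first by rewrite sum_eq1.
    by rewrite big1.
  - have Ho : take (size m).+1 (y :: w) = y :: w by rewrite take_oversize //=; lia.
    rewrite Ho big1 ?add0n; last first.
      move=> z _; case: eqP => // /(f_equal size); rewrite size_rcons /= => -[] Hw.
      by move: Hs; rewrite Hw ltnn.
    have Ho2 : take (size m) (y :: w) = y :: w by rewrite take_oversize //=.
    have Hd1 : suff (size m) w = w.
      by rewrite /suff (_ : size w - size m = 0) ?drop0 //; lia.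
    have Hd2 : suff (size m) (y :: w) = y :: w.
      by rewrite /suff (_ : size (y :: w) - size m = 0) ?drop0 //= ; lia.
    rewrite Ho2 Hd1 Hd2.
    case: (eqVneq w m) => [Hw|_]; first by move: Hs; rewrite Hw ltnn.
    by rewrite addn0.
rewrite occ_cons IH; under [X in _ = X + _]eq_bigr => x _ do rewrite occ_cons.
rewrite [in RHS]big_split addnCA key [X in _ = X + _]addnC -addnA //.
Qed.

End Occ.

Section Words.
Variable S : finType.
Implicit Types m w u v x : seq S.

Lemma size_pref k w : size (pref k w) <= k.
Proof. rewrite /pref size_take; case: ltnP => //; lia. Qed.

Lemma size_suff k w : size (suff k w) <= k.
Proof. rewrite /suff size_drop; lia. Qed.

Lemma pref_pref a b w : a <= b -> pref a (pref b w) = pref a w.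
Proof. by move=> H; rewrite /pref take_takel. Qed.

Lemma suff_suff a b w : a <= b -> suff a (suff b w) = suff a w.
Proof.
move=> H; rewrite /suff size_drop drop_drop; congr drop; lia.
Qed.

Lemma suff_cat k u v : k <= size v -> suff k (u ++ v) = suff k v.
Proof.
move=> H; rewrite /suff size_cat drop_cat.
case: ltnP => H1; first lia.
congr drop; lia.
Qed.

Lemma pref_cat k u v : k <= size u -> pref k (u ++ v) = pref k u.
Proof.
move=> H; rewrite /pref take_cat; case: ltnP => // H1.
have -> : k = size u by apply/eqP; rewrite eqn_leq H H1.
by rewrite subnn take0 cats0 take_size.
Qed.

Lemma prefix_catS m s t : prefix m (s ++ t) -> size m <= size s -> prefix m s.
Proof.
move=> Hp H2; move: Hp; rewrite !prefixE take_cat; case: ltnP => // H1.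
have E : size m = size s by apply/eqP; rewrite eqn_leq H1 H2.
by rewrite E subnn take0 cats0 take_size.
Qed.

Lemma infix_window m u x v : infix m (u ++ x ++ v) -> size m <= (size x).+1 ->
  infix m (u ++ x) \/ infix m (x ++ v).
Proof.
elim: u => [|y u IH]; first by right.
rewrite cat_cons infix_consl => /orP [Hp|Hi] Hs.
  left; apply: prefixW; apply: (@prefix_catS _ _ v); first by rewrite -catA.
  rewrite /= size_cat; lia.
case: (IH Hi Hs) => [H|H]; last by right.
by left; rewrite cat_cons infix_consl H orbT.
Qed.

End Words.

Definition wa n := nseq n false ++ true :: nseq n false.
Definition wb n := nseq n false ++ true :: nseq n false ++ true :: nseq n false.

Lemma wab_eq l n : 0 < l -> l <= n ->
  [/\ pref l.-1 (wa n) = pref l.-1 (wb n),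
      (forall m, infixes l (wa n) m <-> infixes l (wb n) m) &
      suff l.-1 (wa n) = suff l.-1 (wb n)].
Proof.
move=> l0 ln; split.
- rewrite /wa /wb !pref_cat // size_nseq; lia.
- move=> m; rewrite /infixes; split=> -[Hs Hi]; split => //.
    apply: (infix_trans Hi).
    by rewrite /wb -cat_cons catA /wa; apply: prefix_infix.
  have E : wb n = (nseq n false ++ [:: true]) ++ nseq n false ++ (true :: nseq n false).
    by rewrite /wb -catA.
  rewrite E in Hi.
  case: (infix_window Hi _); first by rewrite size_nseq Hs; lia.
    by rewrite -catA.
  by [].
- have E1 : wa n = (nseq n false ++ [:: true]) ++ nseq n false by rewrite /wa -catA.
  have E2 : wb n = (nseq n false ++ true :: nseq n false ++ [:: true]) ++ nseq n false.
    by rewrite /wb -catA cat_cons -catA.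
  rewrite E1 E2 !suff_cat // size_nseq; lia.
Qed.

Lemma wa_count n : count_mem true (wa n) = 1.
Proof. by rewrite /wa count_cat /= !count_nseq. Qed.
Lemma wb_count n : count_mem true (wb n) = 2.
Proof. by rewrite /wb count_cat /= count_cat /= !count_nseq. Qed.

Section Sums.
Local Open Scope ring_scope.
Variable S : finType.

Lemma sum_mono l (alpha : l.-tuple S -> Rdefinitions.R) (w w' : seq S) :
  (forall m, 0 <= alpha m) -> (forall m : l.-tuple S, (occ (tval m) w' <= occ (tval m) w)%N) ->
  \sum_(m : l.-tuple S) alpha m * (occ (tval m) w')%:R <=
  \sum_(m : l.-tuple S) alpha m * (occ (tval m) w)%:R.
Proof.
move=> Ha Ho; apply: ler_sum => m _; apply: ler_pM => //; rewrite ?ler_nat //.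
Qed.

Lemma sum_ind l (m0 : l.-tuple S) (F : l.-tuple S -> Rdefinitions.R) :
  \sum_(m : l.-tuple S) (if tval m == tval m0 then 1 else 0) * F m = F m0.
Proof.
rewrite (bigD1 m0) //= eqxx mul1r big1 ?addr0 // => m Hm.
have -> : (tval m == tval m0) = false.
  by apply/negbTE; apply: contra Hm => /eqP H; apply/eqP; apply: val_inj.
by rewrite mul0r.
Qed.

Lemma sum_zero l (w : seq S) :
  \sum_(m : l.-tuple S) (fun _ => 0 : Rdefinitions.R) m * (occ (tval m) w)%:R = 0.
Proof. by rewrite big1 // => m _; rewrite mul0r. Qed.

End Sums.

Definition Dcl (S : finType) (l : nat) (L : lang S) :=
  forall w w' : seq S, w <> [::] -> w' <> [::] ->
    pref l.-1 w' = pref l.-1 w -> suff l.-1 w' = suff l.-1 w ->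
    (forall m : seq S, size m = l -> occ m w' <= occ m w) -> L w -> L w'.

Lemma Dcl_step (S : finType) l (L : lang S) : Dcl l L -> Dcl l.+1 L.
Proof.
move=> H w w' n n' Hp Hs Ho; apply: H => //.
- by rewrite -(@pref_pref _ l.-1 l) ?Hp ?pref_pref //=; lia.
- by rewrite -(@suff_suff _ l.-1 l) ?Hs ?suff_suff //=; lia.
- move=> m Hm; rewrite (occ_decomp m w') (occ_decomp m w) Hm -/(l.+1.-1) Hs.
  apply: leq_add => //; apply: leq_sum => x _; apply: Ho.
  by rewrite size_rcons Hm.
Qed.

Lemma Dcl_mono (S : finType) l l' (L : lang S) : l <= l' -> Dcl l L -> Dcl l' L.
Proof.
move=> H; elim: l' H => [|l' IH]; first by rewrite leqn0 => /eqP ->.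
rewrite leq_eqVlt => /orP [/eqP -> //|H] D.
by apply: Dcl_step; apply: IH.
Qed.

Lemma LLT_Dcl (S : finType) (L : lang S) : @LLT S L -> exists l, Dcl l L.
Proof.
move=> [l [pi [sigma [alpha [theta [_ [_ [Ha [_ HL]]]]]]]]].
exists l => w w' n n' Hp Hs Ho Lw.
apply/(HL _ n'); move: (HL _ n) => [+ _] => /(_ Lw) [_ [Hpi [Hsi Hsum]]].
split => //; split; first by rewrite Hp.
split; first by rewrite Hs.
apply: le_trans Hsum; apply: sum_mono => // m; apply: Ho; exact: size_tuple.
Qed.

Lemma LLT_UI_Dcl (S : finType) (L : lang S) : @LLT_UI S L -> exists l, Dcl l L.
Proof.
move=> [L' [G E]].
suff [l D] : exists l, Dcl l L'.
  exists l => w w' n n' Hp Hs Ho Lw; apply/(E _ n'); apply: (D w) => //.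
  by apply/E.
elim: G => {L' E} [L' /LLT_Dcl //|L1 L2 _ [l1 D1] _ [l2 D2]|L1 L2 _ [l1 D1] _ [l2 D2]].
- exists (maxn l1 l2) => w w' n n' Hp Hs Ho [H|H].
    by left; apply: (Dcl_mono (leq_maxl l1 l2) D1 n n' Hp Hs Ho).
  by right; apply: (Dcl_mono (leq_maxr l1 l2) D2 n n' Hp Hs Ho).
- exists (maxn l1 l2) => w w' n n' Hp Hs Ho [H1 H2]; split.
    by apply: (Dcl_mono (leq_maxl l1 l2) D1 n n' Hp Hs Ho).
  by apply: (Dcl_mono (leq_maxr l1 l2) D2 n n' Hp Hs Ho).
Qed.

Lemma cat_cons_nn (T : Type) (s t : seq T) x : s ++ x :: t <> [::].
Proof. by case: s. Qed.

Lemma wa_nn n : wa n <> [::]. Proof. exact: cat_cons_nn. Qed.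
Lemma wb_nn n : wb n <> [::]. Proof. exact: cat_cons_nn. Qed.
Arguments wa_nn : clear implicits.
Arguments wb_nn : clear implicits.

Definition La : lang bool := fun w => (count_mem true w <= 1)%N.

Lemma La_LLT : @LLT bool La.
Proof.
exists 1, (fun u => size u <= 0)%N, (fun u => size u <= 0)%N,
  (fun t : 1.-tuple bool => if tval t == [:: true] then 1%R else 0%R), 1%R.
split => // ; split => //; split; first by move=> m; case: ifP.
split => // w nw; rewrite /La /LLin.
rewrite (sum_ind [tuple true] (fun m : 1.-tuple bool => ((occ (tval m) w)%:R)%R)) /=.
rewrite lern1 -occ_seq1; split.
- by move=> H; split => //; split; [exact: size_pref | split; [exact: size_suff|]].
- by case=> _ [_ [_ H]].
Qed.

Lemma La_notLT : ~ @LT bool La.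
Proof.
move=> [l [l0 H]]; have [Hp Hi Hs] := wab_eq l0 (leqnn l).
have := H _ _ (wa_nn l) (wb_nn l) Hp Hi Hs.
by rewrite /La wa_count wb_count; case=> /(_ isT).
Qed.

Lemma La_notSLT : ~ @SLT bool La.
Proof.
move=> [l [pi [sigma [mu [l0 [_ [_ [_ H]]]]]]]].
have [Hp Hi Hs] := wab_eq l0 (leqnn l).
have := H _ (wa_nn l); have := H _ (wb_nn l).
rewrite /La wa_count wb_count => [[_ H2]] [H1 _].
have : false by apply: H2; move: (H1 isT); rewrite Hp Hs => -[a [b c]]; split => //; split => // m /Hi; exact: b.
by [].
Qed.

Lemma La_notSLT_U : ~ @SLT_U bool La.
Proof.
move=> [L' [G E]].
suff [N HN] : exists N, forall n, (N <= n)%N -> (L' (wa n) <-> L' (wb n)).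
  have := HN _ (leqnn N); rewrite -(E _ (wa_nn N)) -(E _ (wb_nn N)) /La wa_count wb_count.
  by case=> /(_ isT).
elim: G {E} => [L [l [pi [sigma [mu [l0 [_ [_ [_ H]]]]]]]]|L1 L2 _ [N1 H1] _ [N2 H2]].
  exists l => n ln; have [Hp Hi Hs] := wab_eq l0 ln.
  rewrite (H _ (wa_nn n)) (H _ (wb_nn n)) Hp Hs; split => -[a [b c]]; split => //; split => // m /Hi; exact: b.
exists (maxn N1 N2) => n; rewrite geq_max => /andP [n1 n2].
by rewrite (H1 _ n1) (H2 _ n2).
Qed.

Definition Lsa : lang bool := fun w => pref 1 w = [:: true] \/ suff 1 w = [:: true].

Lemma Lsa_LLT_U : @LLT_U bool Lsa.
Proof.
exists Lsa; split; last by [].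
apply: gU_union; apply: gU_base.
- exists 2, (fun u => u = [:: true]), (fun u => size u <= 1)%N, (fun _ => 0%R), 0%R.
  split; first by move=> u ->.
  split => //; split => //; split => // w nw; rewrite /LLin big1 /=; last by move=> m _; rewrite mul0r.
  split; last by case=> _ [].
  move=> H; split => //; split => //; split => //; exact: size_suff.
- exists 2, (fun u => size u <= 1)%N, (fun u => u = [:: true]), (fun _ => 0%R), 0%R.
  split => //; split; first by move=> u ->.
  split => //; split => // w nw; rewrite /LLin big1 /=; last by move=> m _; rewrite mul0r.
  split; last by case=> _ [_ []].
  move=> H; split => //; split => //; exact: size_pref.
Qed.

Lemma Lsa_notLLT : ~ @LLT bool Lsa.
Proof.
move=> [l [pi [sigma [alpha [theta [_ [_ [Ha [_ E]]]]]]]]].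
set w := nseq l.+1 false.
have nw : w <> [::] by [].
have L1 : Lsa (w ++ [:: true]) by right; rewrite /Lsa suff_cat.
have L2 : Lsa ([:: true] ++ w) by left.
have [_ [Hp1 _]] := proj1 (E _ (@cat_cons_nn _ _ _ _)) L1.
have [_ [_ [Hs2 Hsum2]]] := proj1 (E _ (@cat_cons_nn _ [::] _ _)) L2.
have sw : (l.-1 <= size w)%N by rewrite /w size_nseq; lia.
have : Lsa w.
  apply/(E _ nw); split => //; split; first by rewrite pref_cat in Hp1.
  have E2 : [::] ++ true :: w = [:: true] ++ w by [].
  rewrite E2 in Hs2 Hsum2.
  split; first by rewrite suff_cat in Hs2.
  apply: le_trans Hsum2; apply: sum_mono => // m; exact: occ_catl.
rewrite /Lsa /w /suff size_nseq drop_nseq subn1 /= subSnn.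
by case=> [|] /=.
Qed.

Definition Lc : lang bool := fun w => true \in w.

Lemma Lc_occ w : Lc w <-> (0 < occ [:: true] w)%N.
Proof. by rewrite /Lc occ_pos infix1s. Qed.

Lemma Lc_LTT : @LTT bool Lc.
Proof.
exists 1, 1; split => //; split => // w1 w2 _ _ _ _ H.
have := H [:: true] erefl; rewrite !Lc_occ.
case: (occ [:: true] w1) => [|a]; case: (occ [:: true] w2) => [|b] //=.
- by move=> /(_ (or_introl isT)).
- by move=> /(_ (or_intror isT)).
Qed.

Lemma Lc_LT : @LT bool Lc.
Proof.
exists 1; split => // w1 w2 _ _ _ H _.
have E w : Lc w <-> infixes 1 w [:: true] by rewrite /Lc /infixes -infix1s; split => // -[].
by rewrite !E H.
Qed.

Lemma Lc_notLLT_UI : ~ @LLT_UI bool Lc.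
Proof.
move=> /LLT_UI_Dcl [l D].
set w' := nseq l.+1 false.
have : Lc w'.
  apply: (D (wa l.+1)) => //.
  - by rewrite /wa pref_cat // size_nseq; lia.
  - have -> : wa l.+1 = (w' ++ [:: true]) ++ w' by rewrite /wa -catA.
    by rewrite suff_cat // size_nseq; lia.
  - by move=> m _; rewrite /wa; apply: occ_catr.
  - by rewrite /Lc /wa mem_cat inE orbT.
by rewrite /Lc mem_nseq.
Qed.

Definition Hrel (S : finType) (T l : nat) (w1 w2 : seq S) :=
  [/\ pref l.-1 w1 = pref l.-1 w2, suff l.-1 w1 = suff l.-1 w2 &
      forall m : seq S, size m = l -> (occ m w1 < T \/ occ m w2 < T) -> occ m w1 = occ m w2].

Lemma LTT_H (S : finType) (L : lang S) :
  @LTT S L <-> exists T l, 0 < T /\ 0 < l /\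
     forall w1 w2, w1 <> [::] -> w2 <> [::] -> Hrel T l w1 w2 -> (L w1 <-> L w2).
Proof.
split.
- move=> [T [l [T0 [l0 H]]]]; exists T, l; split => //; split => // w1 w2 n1 n2 [a b c].
  exact: H.
- move=> [T [l [T0 [l0 H]]]]; exists T, l; split => //; split => // w1 w2 n1 n2 a b c.
  by apply: H.
Qed.

Lemma term_le_sum (S : finType) (F : S -> nat) (i : S) : F i <= \sum_(j : S) F j.
Proof. by rewrite (bigD1 i) //= leq_addr. Qed.

Lemma Hrel_step_aux (S : finType) T l (w1 w2 : seq S) :
  suff l w1 = suff l w2 ->
  (forall m : seq S, size m = l.+1 -> occ m w1 < T -> occ m w1 = occ m w2) ->
  forall m : seq S, size m = l -> occ m w1 < T -> occ m w1 = occ m w2.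
Proof.
move=> Hs H m Hm Ho.
rewrite (occ_decomp m w1) (occ_decomp m w2) Hm Hs; congr (_ + _).
apply: eq_bigr => x _; apply: H; first by rewrite size_rcons Hm.
apply: leq_ltn_trans Ho; rewrite (occ_decomp m w1).
apply: leq_trans (leq_addr _ _); exact: (term_le_sum (fun x => occ (rcons m x) w1)).
Qed.

Lemma Hrel_step (S : finType) T l (w1 w2 : seq S) : Hrel T l.+1 w1 w2 -> Hrel T l w1 w2.
Proof.
move=> [Hp Hs Ho]; split.
- by rewrite -(@pref_pref _ l.-1 l) ?Hp ?pref_pref //=; lia.
- by rewrite -(@suff_suff _ l.-1 l) ?Hs ?suff_suff //=; lia.
- move: Hs => /= Hs m Hm [H|H].
    by apply: (Hrel_step_aux Hs _ Hm H) => m' Hm' H'; apply: Ho => //; left.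
  symmetry; apply: (Hrel_step_aux (esym Hs) _ Hm H) => m' Hm' H'.
  by symmetry; apply: Ho => //; right.
Qed.

Lemma Hrel_monoT (S : finType) T T' l (w1 w2 : seq S) : T <= T' -> Hrel T' l w1 w2 -> Hrel T l w1 w2.
Proof.
move=> HT [Hp Hs Ho]; split => // m Hm [H|H]; apply: Ho => //.
  by left; apply: leq_trans HT.
by right; apply: leq_trans HT.
Qed.

Lemma Hrel_mono (S : finType) T T' l l' (w1 w2 : seq S) :
  T <= T' -> l <= l' -> Hrel T' l' w1 w2 -> Hrel T l w1 w2.
Proof.
move=> HT; elim: l' => [|l' IH].
  by rewrite leqn0 => /eqP -> /(Hrel_monoT HT).
rewrite leq_eqVlt => /orP [/eqP -> /(Hrel_monoT HT) //|H] /Hrel_step.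
exact: IH.
Qed.

Section LLT_LTT.
Local Open Scope ring_scope.

Lemma sum_ge_term (S : finType) l (F : l.-tuple S -> Rdefinitions.R) (i : l.-tuple S) :
  (forall j, 0 <= F j) -> F i <= \sum_(j : l.-tuple S) F j.
Proof.
move=> H; rewrite (bigD1 i) //= lerDl; apply: sumr_ge0 => j _; exact: H.
Qed.

Lemma LLT_LTT (S : finType) (L : lang S) : @LLT S L -> @LTT S L.
Proof.
move=> [l [pi [sigma [alpha [theta [_ [_ [Ha [Ht E]]]]]]]]].
apply/LTT_H.
set T := (\sum_(m : l.-tuple S) Num.bound (theta / alpha m)).+1%N.
have HT : forall m, 0 < alpha m -> theta < alpha m * T%:R.
  move=> m am; rewrite mulrC -ltr_pdivrMr //.
  apply: lt_le_trans (archi_boundP _) _; first by rewrite divr_ge0 // ltW.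
  rewrite ler_nat /T; apply: leq_trans (leqnSn _).
  exact: (term_le_sum (fun m => Num.bound (theta / alpha m))).
exists T, l.+1; split => //; split => // w1 w2 n1 n2 /Hrel_step [Hp Hs Ho].
rewrite (E _ n1) (E _ n2) /LLin Hp Hs.
suff K : (\sum_(m : l.-tuple S) alpha m * (occ (tval m) w1)%:R <= theta) <->
          (\sum_(m : l.-tuple S) alpha m * (occ (tval m) w2)%:R <= theta).
  by rewrite K; split => -[_ X]; split.
have big w m : (T <= occ (tval m) w)%N -> 0 < alpha m ->
     ~ (\sum_(m : l.-tuple S) alpha m * (occ (tval m) w)%:R <= theta).
  move=> Hw am Hle; have := HT m am.
  rewrite ltNge => /negP; apply; apply: le_trans Hle.
  apply: (@le_trans _ _ (alpha m * (occ (tval m) w)%:R)).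
    by apply: ler_pM => //; rewrite ?ler_nat // ltW.
  rewrite (bigD1 m) //= lerDl; apply: sumr_ge0 => j _; exact: mulr_ge0.
case: (classic (exists m, 0 < alpha m /\ (T <= occ (tval m) w1)%N)).
- move=> [m [am Hm]].
  have Hm2 : (T <= occ (tval m) w2)%N.
    rewrite leqNgt; apply/negP => H2.
    have := Ho (tval m) (size_tuple m) (or_intror H2); lia.
  by split => H; [exfalso; apply: (big w1 m) | exfalso; apply: (big w2 m)].
- move=> Hn.
  rewrite (eq_bigr (fun m => alpha m * (occ (tval m) w2)%:R)) //.
  move=> m _; have := Ha m; rewrite le_eqVlt => /orP [/eqP <-|am]; first by rewrite !mul0r.
  rewrite Ho //; first exact: size_tuple.
  left; rewrite ltnNge; apply/negP => H; apply: Hn; exists m; split => //.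
Qed.
End LLT_LTT.

Lemma LTT_ext (S : finType) (L L' : lang S) : lang_eq L L' -> @LTT S L' -> @LTT S L.
Proof.
move=> E [T [l [T0 [l0 H]]]]; exists T, l; split => //; split => // w1 w2 n1 n2 a b c.
by rewrite (E _ n1) (E _ n2); apply: H.
Qed.

Lemma LTT_bin (S : finType) (L1 L2 : lang S) (op : Prop -> Prop -> Prop) :
  (forall A B C D, (A <-> B) -> (C <-> D) -> (op A C <-> op B D)) ->
  @LTT S L1 -> @LTT S L2 -> @LTT S (fun w => op (L1 w) (L2 w)).
Proof.
move=> Hop /LTT_H [T1 [l1 [T10 [l10 H1]]]] /LTT_H [T2 [l2 [T20 [l20 H2]]]].
apply/LTT_H; exists (maxn T1 T2), (maxn l1 l2); split; first by lia.
split; first by lia.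
move=> w1 w2 n1 n2 Hr; apply: Hop.
- by apply: H1 => //; apply: Hrel_mono Hr; apply: leq_maxl.
- by apply: H2 => //; apply: Hrel_mono Hr; apply: leq_maxr.
Qed.

Lemma LTT_compl (S : finType) (L : lang S) : @LTT S L -> @LTT S (fun w => ~ L w).
Proof.
move=> [T [l [T0 [l0 H]]]]; exists T, l; split => //; split => // w1 w2 n1 n2 a b c.
by rewrite (H w1 w2).
Qed.

Lemma UIC_LTT (S : finType) (L : lang S) : closeUIC LLT L -> @LTT S L.
Proof.
move=> [L' [G E]]; apply: (LTT_ext E).
elim: G {E} => {L'} [L' /LLT_LTT //|L1 L2 _ H1 _ H2|L1 L2 _ H1 _ H2|L1 _ H1].
- by apply: LTT_bin => // A B C D -> ->.
- by apply: LTT_bin => // A B C D -> ->.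
- exact: LTT_compl.
Qed.

Section Clos.
Variable S : finType.
Implicit Types L : lang S.

Lemma cl_base L : @LLT S L -> closeUIC LLT L.
Proof. by move=> H; exists L; split => //; apply: gUIC_base. Qed.

Lemma cl_ext L L' : lang_eq L L' -> closeUIC LLT L' -> closeUIC LLT L.
Proof.
move=> E [L'' [G E']]; exists L''; split => // w nw.
by rewrite (E _ nw) (E' _ nw).
Qed.

Lemma cl_U L1 L2 : closeUIC LLT L1 -> closeUIC LLT L2 -> closeUIC LLT (fun w => L1 w \/ L2 w).
Proof.
move=> [A [GA EA]] [B [GB EB]]; exists (fun w => A w \/ B w); split; first exact: gUIC_union.
by move=> w nw; rewrite (EA _ nw) (EB _ nw).
Qed.

Lemma cl_I L1 L2 : closeUIC LLT L1 -> closeUIC LLT L2 -> closeUIC LLT (fun w => L1 w /\ L2 w).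
Proof.
move=> [A [GA EA]] [B [GB EB]]; exists (fun w => A w /\ B w); split; first exact: gUIC_inter.
by move=> w nw; rewrite (EA _ nw) (EB _ nw).
Qed.

Lemma cl_C L1 : closeUIC LLT L1 -> closeUIC LLT (fun w => ~ L1 w).
Proof.
move=> [A [GA EA]]; exists (fun w => ~ A w); split; first exact: gUIC_compl.
by move=> w nw; rewrite (EA _ nw).
Qed.

Lemma cl_full : closeUIC LLT (fun _ : seq S => True).
Proof.
apply: cl_base.
exists 0, (fun u => size u <= 0)%N, (fun u => size u <= 0)%N, (fun _ => 0%R), 0%R.
split => //; split => //; split => //; split => // w nw; rewrite /LLin big1 /=; last by move=> m _; rewrite mul0r.
split => // _; split => //; split; first exact: size_pref.
by split; first exact: size_suff.
Qed.

Lemma cl_empty : closeUIC LLT (fun _ : seq S => False).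
Proof. by apply: (cl_ext _ (cl_C cl_full)) => w _; split => // /(_ I). Qed.

Lemma cl_bigU (I : eqType) (s : seq I) (P : I -> Prop) (F : I -> lang S) :
  (forall x, x \in s -> closeUIC LLT (F x)) ->
  closeUIC LLT (fun w => exists x, [/\ x \in s, P x & F x w]).
Proof.
elim: s => [|y s IH] H.
  by apply: (cl_ext _ cl_empty) => w _; split => // -[x []].
have IH' := IH (fun x hx => H x (introT orP (or_intror hx))).
case: (classic (P y)) => Py.
- apply: (cl_ext _ (cl_U (H y (mem_head _ _)) IH')) => w _; split.
    move=> [x [hx px fx]]; move: hx; rewrite inE => /orP [/eqP Ex|hx].
      by left; rewrite -Ex.
    by right; exists x.
  move=> [Fy|[x [hx px fx]]]; first by exists y; rewrite mem_head.
  by exists x; rewrite inE hx orbT.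
- apply: (cl_ext _ IH') => w _; split.
    move=> [x [hx px fx]]; move: hx; rewrite inE => /orP [/eqP Ex|hx].
      by exfalso; apply: Py; rewrite -Ex.
    by exists x.
  by move=> [x [hx px fx]]; exists x; rewrite inE hx orbT.
Qed.

Lemma cl_bigI (I : eqType) (s : seq I) (F : I -> lang S) :
  (forall x, x \in s -> closeUIC LLT (F x)) ->
  closeUIC LLT (fun w => forall x, x \in s -> F x w).
Proof.
elim: s => [|y s IH] H.
  by apply: (cl_ext _ cl_full) => w _; split.
have IH' := IH (fun x hx => H x (introT orP (or_intror hx))).
apply: (cl_ext _ (cl_I (H y (mem_head _ _)) IH')) => w _; split.
  by move=> A; split => [|x hx]; apply: A; rewrite inE ?eqxx ?hx ?orbT.
move=> [A B] x; rewrite inE => /orP [/eqP ->|]; [exact: A| exact: B].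
Qed.

Lemma cl_pref l (p : seq S) : closeUIC LLT (fun w => pref l.-1 w = p).
Proof.
apply: cl_base.
exists l, (fun u => u = p /\ (size u <= l.-1)%N), (fun u => size u <= l.-1)%N, (fun _ => 0%R), 0%R.
split; first by move=> u [].
split => //; split => //; split => // w nw; rewrite /LLin big1 /=; last by move=> m _; rewrite mul0r.
split; last by case=> _ [[]].
move=> H; split => //; split; first by split => //; exact: size_pref.
by split; first exact: size_suff.
Qed.

Lemma cl_suff l (p : seq S) : closeUIC LLT (fun w => suff l.-1 w = p).
Proof.
apply: cl_base.
exists l, (fun u => size u <= l.-1)%N, (fun u => u = p /\ (size u <= l.-1)%N), (fun _ => 0%R), 0%R.
split => //; split; first by move=> u [].
split => //; split => // w nw; rewrite /LLin big1 /=; last by move=> m _; rewrite mul0r.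
split; last by case=> _ [_ [[]]].
move=> H; split => //; split; first exact: size_pref.
by split; first by split => //; exact: size_suff.
Qed.

Lemma cl_cnt l (m0 : l.-tuple S) (c : nat) : closeUIC LLT (fun w => occ (tval m0) w <= c)%N.
Proof.
apply: cl_base.
exists l, (fun u => size u <= l.-1)%N, (fun u => size u <= l.-1)%N,
  (fun m : l.-tuple S => if tval m == tval m0 then 1%R else 0%R), (c%:R)%R.
split => //; split => //; split; first by move=> m; case: ifP.
split => // w nw; rewrite /LLin.
rewrite (sum_ind m0 (fun m : l.-tuple S => ((occ (tval m) w)%:R)%R)) ler_nat.
split; last by case=> _ [_ [_]].
move=> H; split => //; split; first exact: size_pref.
by split; first exact: size_suff.
Qed.

Lemma cl_min l (m0 : l.-tuple S) (T k : nat) : (0 < T)%N -> (k <= T)%N ->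
  closeUIC LLT (fun w => minn (occ (tval m0) w) T = k).
Proof.
move=> T0 kT.
pose A := if (k < T)%N then (fun w : seq S => ((occ (tval m0) w <= k)%N : Prop)) else (fun _ : seq S => True).
pose B := if (0 < k)%N then (fun w => ~ (occ (tval m0) w <= k.-1)%N) else (fun _ : seq S => True).
have cA : closeUIC LLT A by rewrite /A; case: ifP => _; [apply: cl_cnt | apply: cl_full].
have cB : closeUIC LLT B by rewrite /B; case: ifP => _; [apply: cl_C; apply: cl_cnt | apply: cl_full].
apply: (cl_ext _ (cl_I cA cB)) => w _; rewrite /A /B.
set o := occ (tval m0) w.
case: (ltnP k T) => H1; case: (ltnP 0 k) => H2; split => //.
- by move=> E; split; [lia | move=> H; lia].
- by move=> [H3 H4]; apply/eqP; rewrite eqn_leq; apply/andP; split; [lia| rewrite leqNgt; apply/negP => H5; apply: H4; lia].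
- by move=> E; split => //; lia.
- move=> [H3 _]; lia.
- move=> E; split => // H; lia.
- move=> [_ H4]; have : ~~ (o <= k.-1)%N by apply/negP.
  lia.
- move=> _; lia.
Qed.

End Clos.

Fixpoint allw (S : finType) (n : nat) : seq (seq S) :=
  if n is n'.+1 then [::] :: [seq x :: s | x <- enum S, s <- allw S n'] else [:: [::]].

Lemma allwP (S : finType) n (u : seq S) : (size u <= n)%N -> u \in allw S n.
Proof.
elim: n u => [|n IH] [|x u] //= Hs.
rewrite inE; apply/orP; right.
apply: (allpairs_f (fun x s => x :: s)); first by rewrite mem_enum.
exact: IH.
Qed.

Lemma minn_eq a b T : minn a T = minn b T -> (a < T \/ b < T)%N -> a = b.
Proof. lia. Qed.

Lemma LTT_UIC (S : finType) (L : lang S) : @LTT S L -> closeUIC LLT L.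
Proof.
move=> [T [l [T0 [l0 H]]]].
pose K := {ffun l.-tuple S -> 'I_T.+1}.
pose cands := [seq (ps, f) | ps <- [seq (p, s) | p <- allw S l.-1, s <- allw S l.-1], f <- enum K].
pose Cls (c : (seq S * seq S) * K) (w : seq S) :=
  [/\ pref l.-1 w = c.1.1, suff l.-1 w = c.1.2 &
      forall m : l.-tuple S, minn (occ (tval m) w) T = c.2 m].
pose P c := exists w0, [/\ w0 <> [::], L w0 & Cls c w0].
apply: (@cl_ext _ _ (fun w => exists c, [/\ c \in cands, P c & Cls c w])); last first.
  apply: cl_bigU => c _.
  have C1 := cl_I (cl_I (cl_pref l c.1.1) (cl_suff l c.1.2))
     (cl_bigI (s := enum {: l.-tuple S}) (fun m _ => @cl_min S l m T (c.2 m) T0 (ltn_ord (c.2 m)))).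
  apply: (cl_ext _ C1) => w _; split.
    by move=> [a b d]; split; [split|move=> m _; apply: d].
  by move=> [[a b] d]; split => // m; apply: d; rewrite mem_enum.
move=> w nw; split.
- move=> Lw.
  pose c : (seq S * seq S) * K :=
    ((pref l.-1 w, suff l.-1 w), [ffun m => inord (minn (occ (tval m) w) T)]).
  have Cw : Cls c w.
    split => // m; rewrite /c /= ffunE inordK //; rewrite ltnS; exact: geq_minr.
  exists c; split => //; last by exists w.
  apply: (allpairs_f (fun ps f => (ps, f))); last by rewrite mem_enum.
  apply: (allpairs_f (fun p s => (p, s))); apply: allwP.
    exact: size_pref.
  exact: size_suff.
- move=> [c [_ [w0 [n0 L0 [a0 b0 d0]]] [a b d]]].
  apply/(H w0 w n0 nw); [by rewrite a0 a| by rewrite b0 b| |exact: L0].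
  move=> m Hm; have Ht : size m == l by apply/eqP.
  have := d0 (Tuple Ht); have := d (Tuple Ht); rewrite /= => E1 E2.
  by apply: minn_eq; rewrite E1 E2.
Qed.

Lemma SLT_LLT : csub SLT LLT.
Proof.
move=> S L [l [pi [sigma [mu [l0 [Hpi [Hsig [Hmu H]]]]]]]].
pose alpha := fun m : l.-tuple S => if excluded_middle_informative (mu (tval m)) then (0%R : Rdefinitions.R) else 1%R.
have Ha : forall m, (0 <= alpha m)%R by move=> m; rewrite /alpha; case: excluded_middle_informative.
exists l, (fun u => pi u /\ (size u <= l.-1)%N), (fun u => sigma u /\ (size u <= l.-1)%N), alpha, 0%R.
split; first by move=> u [].
split; first by move=> u [].
split => //; split => // w nw.
have K : (forall m, infixes l w m -> mu m) <->
         (\sum_(m : l.-tuple S) alpha m * (occ (tval m) w)%:R <= 0)%R.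
  split.
  - move=> Hi; rewrite big1 // => m _; rewrite /alpha.
    case: excluded_middle_informative => Hm; first by rewrite mul0r.
    have -> : occ (tval m) w = 0%N.
      apply/eqP; rewrite -leqn0 leqNgt occ_pos; apply/negP => Hin.
      by apply: Hm; apply: Hi; split => //; exact: size_tuple.
    by rewrite mulr0.
  - move=> Hs m [Hsz Hin]; case: (classic (mu m)) => // Hm; exfalso.
    have Ht : size m == l by apply/eqP.
    have := @sum_ge_term S l (fun m => alpha m * (occ (tval m) w)%:R)%R (Tuple Ht).
    move=> /(_ (fun j => mulr_ge0 (Ha j) (ler0n _ _))).
    rewrite /alpha /=; case: excluded_middle_informative => //= _.
    rewrite mul1r => Hle.
    have : (1 <= (occ m w)%:R :> Rdefinitions.R)%R by rewrite ler1n occ_pos.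
    move=> H1; have := le_trans H1 (le_trans Hle Hs).
    by rewrite ler10.
rewrite (H w nw) /LLin K; split.
- by move=> [a [b c]]; split => //; split; [split => //; exact: size_pref | split => //; split => //; exact: size_suff].
- by move=> [_ [[a _] [[b _] c]]].
Qed.

Lemma LLT_LLTU : csub LLT LLT_U.
Proof. by move=> S L H; exists L; split => //; apply: gU_base. Qed.

Lemma LLTU_LLTUI : csub LLT_U LLT_UI.
Proof.
move=> S L [L' [G E]]; exists L'; split => //.
elim: G {E} => {L'} [L' H|L1 L2 _ H1 _ H2]; [exact: gUI_base | exact: gUI_union].
Qed.

Lemma LLTUI_LTT : csub LLT_UI LTT.
Proof.
move=> S L [L' [G E]]; apply: UIC_LTT; exists L'; split => //.
elim: G {E} => {L'} [L' H|L1 L2 _ H1 _ H2|L1 L2 _ H1 _ H2];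
  [exact: gUIC_base | exact: gUIC_union | exact: gUIC_inter].
Qed.

Lemma SLTU_LLTU : csub SLT_U LLT_U.
Proof.
move=> S L [L' [G E]]; exists L'; split => //.
elim: G {E} => {L'} [L' H|L1 L2 _ H1 _ H2]; [apply: gU_base; exact: SLT_LLT | exact: gU_union].
Qed.

Theorem mainTheorem9 :
  (* (1) *)
  (csubneq SLT LLT /\ csubneq LLT LLT_U /\ csub LLT_U LLT_UI /\ csubneq LLT_UI LTT /\
   csubneq SLT_U LLT_U) /\
  (* (2) *)
  (cincomparable LLT LT /\ cincomparable LLT_U LT) /\
  (* (3) *)
  ceq LTT (closeUIC LLT).
Proof.
split; [|split].
- split; first by split; [exact: SLT_LLT | exists _, La; split; [exact: La_LLT|exact: La_notSLT]].
  split; first by split; [exact: LLT_LLTU | exists _, Lsa; split; [exact: Lsa_LLT_U|exact: Lsa_notLLT]].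
  split; first exact: LLTU_LLTUI.
  split; first by split; [exact: LLTUI_LTT | exists _, Lc; split; [exact: Lc_LTT|exact: Lc_notLLT_UI]].
  split; [exact: SLTU_LLTU | exists _, La; split; [exact: LLT_LLTU La_LLT|exact: La_notSLT_U]].
- split; split.
  + by move=> H; apply: La_notLT; apply: H La_LLT.
  + by move=> H; apply: Lc_notLLT_UI; apply: LLTU_LLTUI; apply: LLT_LLTU; apply: H Lc_LT.
  + by move=> H; apply: La_notLT; apply: H; apply: LLT_LLTU La_LLT.
  + by move=> H; apply: Lc_notLLT_UI; apply: LLTU_LLTUI; apply: H Lc_LT.
- move=> S L; split; [exact: LTT_UIC | exact: UIC_LTT].
Qed.
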